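(* For every integer $k \geq 2$, the polynomial $$p_k(x) = x^{2k-1} - x^{k} - x^{k-1} - 1$$ is irreducible over $\mathbb{Q}$ (equivalently, since it is monic with integer coefficients, over $\mathbb{Z}$).
   Context: The polynomials $p_k(x)=x^{2k-1}-x^k-x^{k-1}-1$, $k\ge 2$, are called Liechti–Strenner's polynomials. *)

(* Defs.v *)
From HB Require Import structures.
From mathcomp Require Import all_boot all_order all_algebra.
Set Implicit Arguments. Unset Strict Implicit. Unset Printing Implicit Defensive.
Import Order.TTheory GRing.Theory Num.Theory.
Local Open Scope ring_scope.

Definition liechti_strenner (k : nat) : {poly rat} :=
  'X^(2 * k - 1) - 'X^k - 'X^(k - 1) - 1.

(* Main.v *)
Require Import Defs.
From HB Require Import structures.
From mathcomp Require Import all_boot all_order all_algebra.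
From mathcomp Require Import zify ring.
Set Implicit Arguments. Unset Strict Implicit. Unset Printing Implicit Defensive.
Import Order.TTheory GRing.Theory Num.Theory.
Local Open Scope ring_scope.

Definition mono (c : int) (i : nat) : {poly int} := c *: 'X^i.

Lemma coef_mono c i j : (mono c i)`_j = c * (j == i)%:R.
Proof. by rewrite /mono coefZ coefXn. Qed.

Lemma monoM c d i j : mono c i * mono d j = mono (c * d) (i + j).
Proof. by rewrite /mono -scalerAl -scalerAr scalerA exprD. Qed.

Lemma hornerM1 c i : (mono c i).[1] = c.
Proof. by rewrite /mono hornerZ hornerXn expr1n mulr1. Qed.

Definition revn (N : nat) (f : {poly int}) : {poly int} := \poly_(i < N.+1) f`_(N - i).

Lemma coef_revn N f i : (revn N f)`_i = if (i <= N)%N then f`_(N - i) else 0.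
Proof. by rewrite /revn coef_poly ltnS. Qed.

Lemma size_revn N f : (size (revn N f) <= N.+1)%N.
Proof. exact: size_poly. Qed.

Lemma revnD N f g : revn N (f + g) = revn N f + revn N g.
Proof. by apply/polyP=> i; rewrite coefD !coef_revn coefD; case: ifP; rewrite ?addr0. Qed.

Lemma revn_mono N c i : (i <= N)%N -> revn N (mono c i) = mono c (N - i).
Proof.
move=> iN; apply/polyP=> j; rewrite coef_revn !coef_mono.
case: ifP => jN.
  by congr (_ * (_ %:R)); apply/eqP/eqP; lia.
by rewrite (_ : (j == N - i)%N = false) ?mulr0 //; apply/eqP; lia.
Qed.

Lemma poly_bound (f : {poly int}) m : (size f <= m)%N -> f = \sum_(a < m) f`_a *: 'X^a.
Proof.
move=> sf; rewrite -poly_def; apply/polyP=> i; rewrite coef_poly.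
by case: ifP => // /negbT; rewrite -leqNgt => h; rewrite nth_default // (leq_trans sf h).
Qed.

Lemma coefM_bound m n (f g : {poly int}) t : (size f <= m.+1)%N -> (size g <= n.+1)%N ->
  (f * g)`_t = \sum_(a < m.+1) \sum_(b < n.+1) f`_a * g`_b * ((a + b)%N == t)%:R.
Proof.
move=> sf sg; rewrite {1}(poly_bound sf) {1}(poly_bound sg) mulr_suml coef_sum.
apply: eq_bigr => a _; rewrite mulr_sumr coef_sum; apply: eq_bigr => b _.
have E (x y : int) i j : (x *: 'X^i) * (y *: 'X^j) = (x*y) *: 'X^(i+j) :> {poly int}.
  by rewrite -scalerAl -scalerAr scalerA -exprD.
by rewrite E coefZ coefXn eq_sym.
Qed.

Lemma sum_ind m i (F : nat -> int) : (i <= m)%N ->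
  \sum_(a < m.+1) F a * (a == i :> nat)%:R = F i.
Proof.
move=> im; rewrite (bigD1 (Ordinal (im : (i < m.+1)%N))) //= eqxx mulr1 big1 ?addr0 //.
move=> a /negbTE; rewrite -val_eqE /= => ->; by rewrite mulr0.
Qed.

Lemma coef_top m n (f g : {poly int}) : (size f <= m.+1)%N -> (size g <= n.+1)%N ->
  (f * g)`_(m + n) = f`_m * g`_n.
Proof.
move=> sf sg; rewrite (coefM_bound _ sf sg).
rewrite (eq_bigr (fun a : 'I_m.+1 => (f`_a * g`_n) * (a == m :> nat)%:R)).
  by rewrite (sum_ind (fun a => f`_a * g`_n)).
move=> a _; rewrite (eq_bigr (fun b : 'I_n.+1 => (f`_a * g`_b * (a == m :> nat)%:R) * (b == n :> nat)%:R)).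
  by rewrite (sum_ind (fun b => f`_a * g`_b * (a == m :> nat)%:R)).
move=> b _; rewrite -!mulrA; do 2 congr (_ * _).
have := ltn_ord a; have := ltn_ord b.
rewrite !ltnS => ??.
by repeat (case: eqP => ?); rewrite /= ?mulr1 ?mulr0 ?mul0r ?mul1r //; lia.
Qed.

Lemma sumsq_revn n (f : {poly int}) : (size f <= n.+1)%N ->
  (f * revn n f)`_n = \sum_(a < n.+1) f`_a ^+ 2.
Proof.
move=> sf; rewrite (coefM_bound _ sf (size_revn n f)).
apply: eq_bigr => a _.
rewrite (eq_bigr (fun b : 'I_n.+1 => f`_a * f`_(n - b) * (b == (n - a)%N :> nat)%:R)).
  rewrite (sum_ind (fun b => f`_a * f`_(n - b))) ?leq_subr //.
  have ha : (a <= n)%N := ltn_ord a. by rewrite subKn // expr2.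
move=> b _; rewrite coef_revn (_ : (b <= n)%N); last by have := ltn_ord b; lia.
congr (_ * _%:R); apply/eqP/eqP; have := ltn_ord a; lia.
Qed.

Lemma revn_invol n (f : {poly int}) : (size f <= n.+1)%N -> revn n (revn n f) = f.
Proof.
move=> sf; apply/polyP=> i; rewrite !coef_revn; case: ifP => iN.
  by rewrite leq_subr subKn ?iN.
by rewrite nth_default //; apply: leq_trans sf _; lia.
Qed.

Lemma revn_mul m n (f g : {poly int}) : (size f <= m.+1)%N -> (size g <= n.+1)%N ->
  revn (m + n) (f * g) = revn m f * revn n g.
Proof.
move=> sf sg; apply/polyP=> t.
rewrite coef_revn (coefM_bound _ (size_revn m f) (size_revn n g)).
case: ifP => tN.
  rewrite (coefM_bound _ sf sg).
  rewrite [RHS](reindex_inj rev_ord_inj); apply: eq_bigr => a _.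
  rewrite [RHS](reindex_inj rev_ord_inj); apply: eq_bigr => b _.
  rewrite !coef_revn /=.
  have ha := ltn_ord a; have hb := ltn_ord b.
  rewrite (_ : (m.+1 - a.+1 <= m)%N); last lia.
  rewrite (_ : (n.+1 - b.+1 <= n)%N); last lia.
  rewrite (_ : (m - (m.+1 - a.+1) = a)%N); last lia.
  rewrite (_ : (n - (n.+1 - b.+1) = b)%N); last lia.
  congr (_ * _%:R); apply/eqP/eqP; lia.
rewrite big1 // => a _; rewrite big1 // => b _.
rewrite (_ : (a + b == t)%N = false) ?mulr0 //.
have := ltn_ord a; have := ltn_ord b => ??; apply/eqP; lia.
Qed.

Lemma sq_pos (x : int) : x != 0 -> 1 <= x ^+ 2.
Proof. move=> h; rewrite expr2; nia. Qed.

Lemma sq_ne2 (x : int) : x ^+ 2 != 2.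
Proof.
rewrite expr2; apply/eqP => h.
have : (x <= -2) \/ (x = -1) \/ (x = 0) \/ (x = 1) \/ (2 <= x) by lia.
case=> [?|[?|[?|[?|?]]]]; nia.
Qed.

Lemma two_sq N (F : nat -> int) (Q : pred nat) :
  \sum_(a < N | Q a) F a ^+ 2 = 2 ->
  exists b c, [/\ (c < b < N)%N, Q b, Q c, F b ^+ 2 = 1 & F c ^+ 2 = 1] /\
     (forall l, (l < N)%N -> Q l -> l != b -> l != c -> F l = 0).
Proof.
move=> H.
have ge0 (R : pred 'I_N) : 0 <= \sum_(a < N | R a) F a ^+ 2.
  by apply: sumr_ge0 => a _; rewrite sqr_ge0.
case: (pickP (fun i : 'I_N => Q i && (F i != 0))) => [i /andP[Qi Fi] | none]; last first.
  move: H; rewrite big1 // => a Qa; have := none a; rewrite Qa /= => /negbFE/eqP ->.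
  by rewrite expr0n.
move: H; rewrite (bigD1 i) //= => H.
have Fi1 : F i ^+ 2 = 1.
  have := sq_pos Fi; have := ge0 (fun a => Q a && (a != i)); have := sq_ne2 (F i).
  move: H; set S := (\sum_(_ < _ | _) _); lia.
move: H; rewrite Fi1 => H.
move: H; set S := (\sum_(_ < _ | _) _) => H; have S1 : S = 1 by lia.
rewrite /S in S1; clear H S.
case: (pickP (fun j : 'I_N => (Q j && (j != i)) && (F j != 0))) => [j /andP[/andP[Qj ji] Fj] | none]; last first.
  move: S1; rewrite big1 // => a Qa; have := none a; rewrite Qa /= => /negbFE/eqP ->.
  by rewrite expr0n.
move: S1; rewrite (bigD1 j) /= ?Qj ?ji // => S1.
have Fj1 : F j ^+ 2 = 1.
  have := sq_pos Fj; have := ge0 (fun a => (Q a && (a != i)) && (a != j)).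
  move: S1; set S := (\sum_(_ < _ | _) _); lia.
move: S1; rewrite Fj1 => S1.
move: S1; set T := (\sum_(_ < _ | _) _) => S1; have S2 : T = 0 by lia.
rewrite /T in S2; clear S1 T.
have Z : forall l, (l < N)%N -> Q l -> l != i -> l != j -> F l = 0.
  move=> l lN Ql li lj.
  have P0 : Q (Ordinal lN) && (Ordinal lN != i) && (Ordinal lN != j).
    by rewrite /= Ql -!val_eqE /= li lj.
  have := psumr_eq0P (fun (a : 'I_N) _ => sqr_ge0 (F a)) S2 P0.
  by move/eqP; rewrite sqrf_eq0 => /eqP.
have ij : (i : nat) != j by rewrite val_eqE eq_sym.
case: (ltngtP i j) => [ij' | ji' | /eqP]; last by rewrite (negbTE ij).
  exists j, i; split=> [|l lN Ql lj li]; last exact: Z.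
  by split=> //; rewrite ij' ltn_ord.
exists i, j; split=> [|l lN Ql li lj]; last exact: Z.
by split=> //; rewrite ji' ltn_ord.
Qed.

Ltac simpeq :=
  repeat match goal with
  | |- context[(?x == ?y :> nat)] =>
      (rewrite (_ : (x == y) = true); last (apply/eqP; lia)) ||
      (rewrite (_ : (x == y) = false); last (apply/eqP; lia))
  end.

Ltac clean := rewrite /= ?mulr1n ?mulr0n ?mulr1 ?mulr0 ?mul1r ?mul0r ?addr0 ?add0r ?subr0 ?sub0r.

Section P.
Variable k : nat.
Hypothesis k2 : (2 <= k)%N.
Definition nn := (2 * k - 1)%N.
Definition P := mono 1 nn + mono (-1) k + mono (-1) (k-1) + mono (-1) 0.
Definition Pr := mono (-1) nn + mono (-1) k + mono (-1) (k-1) + mono 1 0.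

Lemma revn_P : revn nn P = Pr.
Proof.
rewrite /P /Pr !revnD !revn_mono; try (rewrite /nn; lia).
rewrite subn0 subnn (_ : (nn - k = k - 1)%N); last (rewrite /nn; lia).
rewrite (_ : (nn - (k - 1) = k)%N); last (rewrite /nn; lia).
ring.
Qed.

Lemma coefPPr : (P * Pr)`_nn = 4.
Proof.
rewrite /P /Pr !mulrDl !mulrDr !monoM !coefD !coef_mono.
rewrite /nn; simpeq; clean.
done.
Qed.

Lemma pm1 (e : int) : (e == 1) || (e == -1) -> e = 1 \/ e = -1.
Proof. by case/orP=> /eqP ->; [left|right]. Qed.

Lemma size_mono c i : (size (mono c i) <= i.+1)%N.
Proof. by rewrite /mono (leq_trans (size_scale_leq _ _)) // size_polyXn. Qed.

Lemma size_mono4 N c1 c2 c3 c4 i1 i2 i3 i4 :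
  (i1 <= N)%N -> (i2 <= N)%N -> (i3 <= N)%N -> (i4 <= N)%N ->
  (size (mono c1 i1 + mono c2 i2 + mono c3 i3 + mono c4 i4)%R <= N.+1)%N.
Proof.
move=> h1 h2 h3 h4.
have hm i c : (i <= N)%N -> (size (mono c i) <= N.+1)%N.
  by move=> h; apply: leq_trans (size_mono _ _) _.
apply: leq_trans (size_add _ _) _; rewrite geq_max hm ?andbT //.
apply: leq_trans (size_add _ _) _; rewrite geq_max hm ?andbT //.
apply: leq_trans (size_add _ _) _; rewrite geq_max !hm //.
Qed.

Lemma PPr_closed : P * Pr = mono (-1) (nn + nn) + mono 1 (nn + 1) + mono 4 nn + mono 1 (nn - 1) + mono (-1) 0.
Proof.
have [j hk] : exists j, k = j.+1 by exists (k - 1)%N; lia.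
have hn : nn = (j + j).+1 by rewrite /nn hk; lia.
rewrite /P /Pr hn hk subSS subn0 (_ : ((j + j).+1 - 1 = j + j)%N); last lia.
rewrite /mono !scaleN1r !scale1r !(exprS, exprD, expr0) scaler_nat.
ring.
Qed.

Lemma comb (e1 e2 e3 e4 : int) b c :
  (e1 == 1) || (e1 == -1) -> (e2 == 1) || (e2 == -1) ->
  (e3 == 1) || (e3 == -1) -> (e4 == 1) || (e4 == -1) ->
  (0 < c)%N -> (c < b)%N -> (b < nn)%N ->
  let w := mono e1 nn + mono e2 b + mono e3 c + mono e4 0 in
  w * (mono e4 nn + mono e3 (nn - c) + mono e2 (nn - b) + mono e1 0) = P * Pr ->
  [\/ w = P, w = - P, w = Pr | w = - Pr].
Proof.
move=> /pm1 h1 /pm1 h2 /pm1 h3 /pm1 h4 c0 cb bn w E.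
have hn : nn = (2 * k - 1)%N by [].
have Htop : e1 * e4 = -1.
  have := congr1 (fun p : {poly int} => p`_(nn + nn)) E.
  rewrite /= coef_top; try (apply: size_mono4; lia).
  rewrite PPr_closed !coefD !coef_mono; simpeq; clean.
  done.
have H1 := congr1 (fun p : {poly int} => p.[1]) E.
move: H1; rewrite /= /w /P /Pr !hornerM !hornerD !hornerM1 => H1.
have [he4 he3] : e4 = - e1 /\ e3 = e2.
  move: Htop H1; case: h1 => ->; case: h2 => ->; case: h3 => ->; case: h4 => ->; lia.
subst e4 e3.
have s1 : e1 * e1 = 1 by case: h1 => ->.
have s2 : e2 * e2 = 1 by case: h2 => ->.
have s12 : e1 * e2 = 1 \/ e1 * e2 = -1 by case: h1 => ->; case: h2 => ->; lia.
have Ha := congr1 (fun p : {poly int} => p`_(nn + nn - c)) E.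
move: Ha; rewrite /= /w PPr_closed !mulrDl !mulrDr !monoM !coefD !coef_mono; simpeq; clean.
move=> Ha.
have hbc : (b + c = nn)%N by move: Ha; repeat (case: eqP => ?); clean; lia.
have Hb := congr1 (fun p : {poly int} => p`_(nn + 1)) E.
move: Hb; rewrite /= /w PPr_closed !mulrDl !mulrDr !monoM !coefD !coef_mono; simpeq; clean.
move=> Hb.
have [hb hc] : b = k /\ c = (k-1)%N by move: Hb; repeat (case: eqP => ?); clean; lia.
subst w b c; rewrite /P /Pr /mono !scaleN1r !scale1r.
case: h1 => ->; case: h2 => ->; rewrite ?scaleN1r ?scale1r ?opprK.
all: first [by apply: Or41; ring | by apply: Or42; ring | by apply: Or43; ring | by apply: Or44; ring].
Qed.

Lemma P0 : P`_0 = -1.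
Proof. have hn : nn = (2 * k - 1)%N by []. rewrite /P !coefD !coef_mono; simpeq; clean. done. Qed.

Lemma nocommon (f u v : {poly int}) : (1 < size f)%N -> P = f * u -> Pr = f * v -> False.
Proof.
move=> sf Pu Pv.
have hn : nn = (2 * k - 1)%N by [].
have f0 : f`_0 != 0.
  apply/eqP=> f0; have := P0; rewrite Pu coef0M f0 mul0r => /eqP.
  by rewrite eq_sym oppr_eq0 oner_eq0.
have [j hk] : exists j, k = j.+1 by exists (k - 1)%N; lia.
have hS : P + Pr = ('X^j * ('X + 1)) * (- 2%:R)%:P.
  rewrite /P /Pr /mono hk /= subn1 /= !scaleN1r !scale1r polyCN polyC_natr exprS; ring.
have hD : P - Pr = ('X^nn - 1) * 2%:R%:P.
  rewrite /P /Pr /mono !scaleN1r !scale1r polyC_natr; ring.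
have d1 : f %| 'X^j * ('X + 1).
  have : f %| ('X^j * ('X + 1)) * (- 2%:R)%:P by rewrite -hS Pu Pv -mulrDr dvdp_mulr.
  by rewrite mulrC mul_polyC dvdpZr // oppr_eq0 pnatr_eq0.
have d2 : f %| 'X^nn - 1.
  have : f %| ('X^nn - 1) * 2%:R%:P by rewrite -hD Pu Pv -mulrBr dvdp_mulr.
  by rewrite mulrC mul_polyC dvdpZr // pnatr_eq0.
have cop : coprimep f ('X^j).
  apply: coprimep_expr; have := coprimep_XsubC f 0; rewrite subr0 => ->.
  by rewrite /root horner_coef0.
move: d1; rewrite Gauss_dvdpr // => d1.
have sX : size ('X + 1 : {poly int}) = 2%N by rewrite -polyC1 size_XaddC.
have sf2 : size f = 2%N.
  have : (size f <= 2)%N.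
    by rewrite -sX; apply: dvdp_leq d1; rewrite -size_poly_eq0 sX.
  lia.
have e1 : f %= 'X + 1 by rewrite -dvdp_size_eqp // sX sf2.
have := d2; rewrite (eqp_dvdl _ e1).
rewrite (_ : 'X + 1 = 'X - (-1)%:P); last by rewrite polyCN polyC1 opprK.
rewrite dvdp_XsubCl /root !hornerE.
have -> : nn = (2 * (k - 1)).+1 by lia.
by rewrite exprS exprM sqrrN expr1n mulr1.
Qed.

Lemma unit_int (x y : int) : x * y = 1 -> (x == 1) || (x == -1).
Proof.
move=> h; have := congr1 absz h; rewrite abszM /= => /eqP; rewrite muln_eq1 => /andP[/eqP hx _].
have : x = 1 \/ x = -1 by lia.
by case=> ->; rewrite eqxx ?orbT.
Qed.

Lemma sq1 (x : int) : (x == 1) || (x == -1) -> x ^+ 2 = 1.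
Proof. by case/orP=> /eqP ->; rewrite ?expr1n ?sqrrN ?expr1n. Qed.

Lemma size_eq (f : {poly int}) N : f`_N != 0 -> (forall j, (N < j)%N -> f`_j = 0) -> size f = N.+1.
Proof.
move=> fN hj; apply/eqP; rewrite eqn_leq; apply/andP; split.
  by apply/leq_sizeP => j; apply: hj.
by rewrite ltnNge; apply: contra fN => h; rewrite nth_default.
Qed.

Lemma sizeP : size P = nn.+1.
Proof.
have hn : nn = (2 * k - 1)%N by [].
apply: size_eq.
  by rewrite /P !coefD !coef_mono; simpeq; clean.
by move=> j hj; rewrite /P !coefD !coef_mono; simpeq; clean.
Qed.

Lemma PnN : P`_nn = 1.
Proof. have hn : nn = (2 * k - 1)%N by []. by rewrite /P !coefD !coef_mono; simpeq; clean. Qed.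

Lemma core (g h : {poly int}) : P = g * h -> (size g <= 1)%N \/ (size h <= 1)%N.
Proof.
move=> Pgh; case: (leqP (size g) 1) => sg; first by left.
case: (leqP (size h) 1) => sh; first by right.
exfalso.
have hn : nn = (2 * k - 1)%N by [].
have g0 : g != 0 by rewrite -size_poly_eq0; lia.
have h0 : h != 0 by rewrite -size_poly_eq0; lia.
have [m1 sgm] : exists m1, size g = m1.+1 by exists (size g).-1; lia.
have [m2 shm] : exists m2, size h = m2.+1 by exists (size h).-1; lia.
have m12 : (m1 + m2)%N = nn.
  have := sizeP; rewrite Pgh size_mul // sgm shm; lia.
have Hlead : g`_m1 * h`_m2 = 1.
  by rewrite -coef_top ?sgm ?shm // -Pgh m12 PnN.
have H0 : g`_0 * h`_0 = -1 by rewrite -coef0M -Pgh P0.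
have ug1 := unit_int Hlead.
have uh1 : (h`_m2 == 1) || (h`_m2 == -1) by apply: (@unit_int _ (g`_m1)); rewrite mulrC.
have ug0 : (g`_0 == 1) || (g`_0 == -1) by apply: (@unit_int _ (- h`_0)); rewrite mulrN H0 opprK.
have uh0 : (h`_0 == 1) || (h`_0 == -1) by apply: (@unit_int _ (- g`_0)); rewrite mulrN mulrC H0 opprK.
set hr := revn m2 h.
have [w Hw] : exists w, w = g * hr by exists (g * hr).
have shr : (size hr <= m2.+1)%N := size_revn m2 h.
have sw : (size w <= nn.+1)%N.
  rewrite Hw; apply: leq_trans (size_mul_leq _ _) _; rewrite sgm; lia.
have revw : revn nn w = revn m1 g * h.
  by rewrite Hw -m12 revn_mul ?sgm // revn_invol ?shm.
have revP : revn nn P = revn m1 g * hr.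
  by rewrite Pgh -m12 revn_mul ?sgm ?shm.
have E : w * revn nn w = P * revn nn P by rewrite revw revP Pgh Hw; ring.
have w0 : w`_0 = g`_0 * h`_m2 by rewrite Hw coef0M coef_revn leq0n subn0.
have wn : w`_nn = g`_m1 * h`_0.
  by rewrite Hw -m12 coef_top ?sgm // coef_revn leqnn subnn.
have uw0 : (w`_0 == 1) || (w`_0 == -1).
  by rewrite w0; move: ug0 uh1 => /pm1[]-> /pm1[]->; rewrite ?mulN1r ?mul1r ?opprK eqxx ?orbT.
have uwn : (w`_nn == 1) || (w`_nn == -1).
  by rewrite wn; move: ug1 uh0 => /pm1[]-> /pm1[]->; rewrite ?mulN1r ?mul1r ?opprK eqxx ?orbT.
have SS : \sum_(a < nn.+1) w`_a ^+ 2 = 4 by rewrite -sumsq_revn // E revn_P coefPPr.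
have om : (ord_max : 'I_nn.+1) != ord0 by rewrite -val_eqE /=; lia.
rewrite (bigD1 ord0) // (bigD1 ord_max) //= (sq1 uw0) (sq1 uwn) in SS.
have S2 : \sum_(a < nn.+1 | (a != 0%N :> nat) && (a != nn :> nat)) w`_a ^+ 2 = 2.
  move: SS; rewrite (eq_bigl (fun a : 'I_nn.+1 => (a != 0%N :> nat) && (a != nn :> nat))).
    by lia.
  by move=> a; rewrite -!val_eqE.
have [b [c [[/andP[cb bN] /= /andP[b0 bn] /andP[c0 cn] wb wc] Z]]] :=
  two_sq (Q := fun a => (a != 0%N) && (a != nn)) S2.
have Wdef : w = mono (w`_nn) nn + mono (w`_b) b + mono (w`_c) c + mono (w`_0) 0.
  apply/polyP => t; rewrite !coefD !coef_mono.
  case: (ltnP nn t) => tn.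
    by rewrite nth_default ?(leq_trans sw) //; simpeq; clean.
  have [->|t0] := eqVneq t 0%N; first by simpeq; clean.
  have [->|tnn] := eqVneq t nn; first by simpeq; clean.
  have [->|tb] := eqVneq t b; first by simpeq; clean.
  have [->|tc] := eqVneq t c; first by simpeq; clean.
  by rewrite Z ?t0 ?tnn //; simpeq; clean.
have Wr : revn nn w = mono (w`_0) nn + mono (w`_c) (nn - c) + mono (w`_b) (nn - b) + mono (w`_nn) 0.
  rewrite {1}Wdef !revnD !revn_mono; try lia.
  by rewrite subnn subn0; ring.
have eb : (w`_b == 1) || (w`_b == -1) by rewrite -sqrf_eq1 wb.
have ec : (w`_c == 1) || (w`_c == -1) by rewrite -sqrf_eq1 wc.
have c0' : (0 < c)%N by lia.
have bn' : (b < nn)%N by lia.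
have := comb uwn eb ec uw0 c0' cb bn'.
rewrite -Wdef -Wr -revn_P => /(_ E).
have hr0 : hr != 0.
  apply/eqP => hr0; have := congr1 (fun p : {poly int} => p`_m2) hr0.
  rewrite /hr coef_revn leqnn subnn coef0 => /eqP; apply/negP.
  by move: uh0 => /pm1[]->.
case=> HW.
- have hrh : hr = h by apply: (mulfI g0); rewrite -Hw HW Pgh.
  apply: (@nocommon h g (revn m1 g)) => //; first by rewrite Pgh mulrC.
  by rewrite -revn_P revP hrh mulrC.
- have hrh : hr = - h by apply: (mulfI g0); rewrite -Hw HW Pgh mulrN.
  apply: (@nocommon h g (- revn m1 g)) => //; first by rewrite Pgh mulrC.
  by rewrite -revn_P revP hrh; ring.
- have gg : g = revn m1 g by apply: (mulIf hr0); rewrite -revP -Hw HW.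
  apply: (@nocommon g h hr) => //.
  by rewrite -revn_P revP -gg.
- have gg : revn m1 g = - g.
    by apply: (mulIf hr0); rewrite -revP mulNr -Hw HW opprK.
  apply: (@nocommon g h (- hr)) => //.
  by rewrite -revn_P revP gg mulrN mulNr.
Qed.
End P.


Lemma mapP k : liechti_strenner k = map_poly (intr : int -> rat) (P k).
Proof.
rewrite /liechti_strenner /P /nn /mono !rmorphD /= !map_polyZ !map_polyXn /=.
rewrite !scaleN1r scale1r expr0.
by [].
Qed.

Theorem theorem1p1 (k : nat) : (2 <= k)%N -> irreducible_poly (liechti_strenner k).
Proof.
move=> k2; rewrite mapP; apply/irreducible_rat_int.
split; first by rewrite sizeP // /nn; lia.
move=> q q1 /dvdpP_int [r Pr].
have P0 : P k != 0 by rewrite -size_poly_eq0 sizeP.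
have q0 : q != 0.
  by apply: contraNneq P0 => q0; rewrite Pr q0 zprimitive0 mul0r.
case: (core k2 Pr) => [sq | sr].
  have : (size q <= 1)%N by rewrite -size_zprimitive.
  have : size q != 0%N by rewrite size_poly_eq0.
  lia.
have r0 : r`_0 != 0.
  apply: contraNneq P0 => r00; rewrite Pr [r]size1_polyC // r00 mulr0 //.
have Pq : P k = r`_0 *: zprimitive q by rewrite Pr {1}(size1_polyC sr) mulrC mul_polyC.
apply: (eqp_trans (y := zprimitive q)).
  by rewrite {1}[q]zpolyEprim eqp_scale // zcontents_eq0.
by rewrite Pq eqp_sym eqp_scale.
Qed.
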